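(* Let $S$ be a partial semigroup and let $\mathcal{S}_0,\mathcal{S}_1$ be function arrays over $S$ indexed by finite sets $\Lambda_0,\Lambda_1$ respectively. Then there is a homomorphism of function arrays $\gamma\mathcal{S}_0\otimes\gamma\mathcal{S}_1\to\gamma(\mathcal{S}_0\otimes\mathcal{S}_1)$.
   Context: Partial semigroup: partial operation with $(rs)t$ defined iff $r(st)$ defined, and then equal. A function array over $S$ indexed by non-empty $\Lambda$ and based on a set $X$ assigns to each $\lambda\in\Lambda$ a partial function $\lambda$ from $X$ to $S$ such that for all $s_0,\dots,s_k\in S$ there is $x\in X$ with all $s_i\lambda(x)$ defined. Total: $S$ a semigroup and all $\lambda$ defined everywhere. For $\mathcal{S}$ based on $X$: $\gamma S$ = ultrafilters $\mathcal{U}$ on $S$ with $\{t: st\text{ defined}\}\in\mathcal{U}$ for all $s$, with $B\in\mathcal{U}*\mathcal{V}$ iff $\{s:\{t: st\text{ defined},\ st\in B\}\in\mathcal{V}\}\in\mathcal{U}$ (a semigroup); $\gamma X$ = ultrafilters $\mathcal{U}$ on $X$ with $\{x: s\lambda(x)\text{ defined}\}\in\mathcal{U}$ for all $s,\lambda$; $\lambda$ extends to $\gamma X\to\gamma S$ by $B\in\lambda(\mathcal{U})$ iff $\lambda^{-1}(B)\in\mathcal{U}$; $\gamma\mathcal{S}$ is the total function array over $\gamma S$ indexed by $\Lambda$ based on $\gamma X$. Tensor product: for finite $\Lambda_0,\Lambda_1$ let $\Lambda_0\star\Lambda_1=\Lambda_0\sqcup\Lambda_1\sqcup(\Lambda_0\times\Lambda_1)$;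 for function arrays $\mathcal{S}_i$ over the same partial semigroup $S$ indexed by $\Lambda_i$ and based on $X_i$, $\mathcal{S}_0\otimes\mathcal{S}_1$ is the function array over $S$ indexed by $\Lambda_0\star\Lambda_1$ and based on $X_0\times X_1$ given by $\lambda_0(x_0,x_1)=\lambda_0(x_0)$, $\lambda_1(x_0,x_1)=\lambda_1(x_1)$, $(\lambda_0,\lambda_1)(x_0,x_1)=\lambda_0(x_0)\lambda_1(x_1)$ (defined when this product is). A homomorphism between total function arrays $\mathcal{A}$ (over $A$, based on $X$) and $\mathcal{B}$ (over $B$, based on $Y$) indexed by the same set is a pair $(f,g)$, $f\colon X\to Y$, $g\colon A\to B$ a semigroup homomorphism, with $\lambda(f(x))=g(\lambda(x))$ for all $x,\lambda$. *)

(* Defs.v *)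
From Stdlib Require Import List FinFun.
Set Implicit Arguments.
Unset Strict Implicit.

Record psemigroup := PSemigroup {
  ps_car :> Type;
  ps_mul : ps_car -> ps_car -> option ps_car;
  ps_assoc : forall r s t : ps_car,
    match ps_mul r s with Some rs => ps_mul rs t | None => None end =
    match ps_mul s t with Some st => ps_mul r st | None => None end }.

Record function_array (S : psemigroup) (L X : Type) := FunctionArray {
  fa_map : L -> X -> option S;
  fa_index_nonempty : inhabited L;
  fa_cond : forall (s0 : S) (ss : list S), exists x : X,
    forall (l : L) (s : S), In s (s0 :: ss) ->
      exists y, fa_map l x = Some y /\ ps_mul s y <> None }.

Definition is_ultrafilter (T : Type) (U : (T -> Prop) -> Prop) : Prop :=
  U (fun _ => True) /\ ~ U (fun _ => False) /\
  (forall A B : T -> Prop, U A -> (forall x, A x -> B x) -> U B) /\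
  (forall A B : T -> Prop, U A -> U B -> U (fun x => A x /\ B x)) /\
  (forall A : T -> Prop, U A \/ U (fun x => ~ A x)).

Definition gammaS (S : psemigroup) (U : (S -> Prop) -> Prop) : Prop :=
  is_ultrafilter U /\ forall s : S, U (fun t => ps_mul s t <> None).

Definition gamma_mul (S : psemigroup) (U V : (S -> Prop) -> Prop)
  : (S -> Prop) -> Prop :=
  fun B => U (fun s => V (fun t => exists st, ps_mul s t = Some st /\ B st)).

Definition gammaX (S : psemigroup) (L X : Type) (m : L -> X -> option S)
  (U : (X -> Prop) -> Prop) : Prop :=
  is_ultrafilter U /\
  forall (s : S) (l : L),
    U (fun x => exists y, m l x = Some y /\ ps_mul s y <> None).

Definition gamma_map (S : psemigroup) (L X : Type) (m : L -> X -> option S)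
  (l : L) (U : (X -> Prop) -> Prop) : (S -> Prop) -> Prop :=
  fun B => U (fun x => exists y, m l x = Some y /\ B y).

Definition star (L0 L1 : Type) : Type := ((L0 + L1) + (L0 * L1))%type.

Definition tensor_map (S : psemigroup) (L0 L1 X0 X1 : Type)
  (m0 : L0 -> X0 -> option S) (m1 : L1 -> X1 -> option S)
  : star L0 L1 -> X0 * X1 -> option S :=
  fun l x =>
    match l with
    | inl (inl l0) => m0 l0 (fst x)
    | inl (inr l1) => m1 l1 (snd x)
    | inr (l0, l1) =>
        match m0 l0 (fst x), m1 l1 (snd x) with
        | Some a, Some b => ps_mul a b
        | _, _ => None
        end
    end.

Definition tensor_function_array (S : psemigroup) (L0 L1 X0 X1 : Type)
  (S0 : function_array S L0 X0) (S1 : function_array S L1 X1)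
  : star L0 L1 -> X0 * X1 -> option S :=
  tensor_map (fa_map S0) (fa_map S1).

Definition total_tensor_map (A : Type) (mul : A -> A -> A) (L0 L1 X0 X1 : Type)
  (m0 : L0 -> X0 -> A) (m1 : L1 -> X1 -> A) : star L0 L1 -> X0 * X1 -> A :=
  fun l x =>
    match l with
    | inl (inl l0) => m0 l0 (fst x)
    | inl (inr l1) => m1 l1 (snd x)
    | inr (l0, l1) => mul (m0 l0 (fst x)) (m1 l1 (snd x))
    end.

(** Homomorphism (f, g) between total function arrays indexed by the same L.
    Carriers and bases are given as subsets (inA, inXA) of ambient types. *)
Definition is_fa_hom (L XA XB A B : Type)
  (inXA : XA -> Prop) (inA : A -> Prop) (mulA : A -> A -> A) (mapA : L -> XA -> A)
  (inXB : XB -> Prop) (inB : B -> Prop) (mulB : B -> B -> B) (mapB : L -> XB -> B)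
  (f : XA -> XB) (g : A -> B) : Prop :=
  (forall x, inXA x -> inXB (f x)) /\
  (forall a, inA a -> inB (g a)) /\
  (forall a b, inA a -> inA b -> g (mulA a b) = mulB (g a) (g b)) /\
  (forall (l : L) x, inXA x -> mapB l (f x) = g (mapA l x)).

Definition gamma_tensor_hom (S : psemigroup) (L0 L1 X0 X1 : Type)
  (S0 : function_array S L0 X0) (S1 : function_array S L1 X1)
  (f : ((X0 -> Prop) -> Prop) * ((X1 -> Prop) -> Prop) -> ((X0 * X1 -> Prop) -> Prop))
  (g : ((S -> Prop) -> Prop) -> ((S -> Prop) -> Prop)) : Prop :=
  is_fa_hom
    (* gamma S0 (x) gamma S1: over gamma S, based on gamma X0 x gamma X1 *)
    (fun x => gammaX (fa_map S0) (fst x) /\ gammaX (fa_map S1) (snd x))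
    (@gammaS S) (@gamma_mul S)
    (total_tensor_map (@gamma_mul S) (gamma_map (fa_map S0)) (gamma_map (fa_map S1)))
    (* gamma (S0 (x) S1): over gamma S, based on gamma (X0 x X1) *)
    (gammaX (tensor_function_array S0 S1))
    (@gammaS S) (@gamma_mul S)
    (gamma_map (tensor_function_array S0 S1))
    f g.

(* Main.v *)
Require Import Defs.
From Stdlib Require Import List FinFun.
From Stdlib Require Import FunctionalExtensionality PropExtensionality Classical.

Lemma uf_up {T : Type} {U : (T -> Prop) -> Prop} : is_ultrafilter U ->
  forall A B : T -> Prop, U A -> (forall x, A x -> B x) -> U B.
Proof. intros (_&_&H&_); exact H. Qed.

Lemma uf_const {T : Type} {U : (T -> Prop) -> Prop} (P : Prop) :
  is_ultrafilter U -> (U (fun _ => P) <-> P).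
Proof.
  intros HU; pose proof HU as (HT&HF&Hup&_). split.
  - intros H. destruct (Classical_Prop.classic P) as [p|np]; auto.
    exfalso; apply HF; apply (Hup _ _ H); auto.
  - intros p; apply (Hup _ _ HT); auto.
Qed.

Lemma uf_cong {T : Type} {U : (T -> Prop) -> Prop} (A B : T -> Prop) :
  is_ultrafilter U -> (forall x, A x <-> B x) -> (U A <-> U B).
Proof.
  intros HU H; split; intros HA; apply (uf_up HU _ _ HA); apply H.
Qed.

Definition prodU {X0 X1 : Type} (U0 : (X0 -> Prop) -> Prop) (U1 : (X1 -> Prop) -> Prop)
  : (X0 * X1 -> Prop) -> Prop :=
  fun B => U0 (fun x0 => U1 (fun x1 => B (x0, x1))).

Lemma prodU_uf {X0 X1 : Type} (U0 : (X0 -> Prop) -> Prop) (U1 : (X1 -> Prop) -> Prop) :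
  is_ultrafilter U0 -> is_ultrafilter U1 -> is_ultrafilter (prodU U0 U1).
Proof.
  intros H0 H1. pose proof H0 as (T0&F0&Up0&I0&Ul0).
  pose proof H1 as (T1&F1&Up1&I1&Ul1). unfold prodU.
  split; [|split; [|split; [|split]]].
  - apply (Up0 _ _ T0). intros; exact T1.
  - intros H. apply F0. apply (Up0 _ _ H). intros x0 Hx. apply F1. exact Hx.
  - intros A B HA HAB. apply (Up0 _ _ HA). intros x0 Hx. apply (Up1 _ _ Hx).
    intros; apply HAB; auto.
  - intros A B HA HB. apply (Up0 _ _ (I0 _ _ HA HB)). intros x0 [Ha Hb].
    apply (I1 _ _ Ha Hb).
  - intros A. destruct (Ul0 (fun x0 => U1 (fun x1 => A (x0, x1)))) as [H|H]; [left; exact H|right].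
    apply (Up0 _ _ H). intros x0 Hn. destruct (Ul1 (fun x1 => A (x0, x1))) as [K|K].
    + contradiction. + exact K.
Qed.

Theorem proposition3p2 (S : psemigroup) (L0 L1 X0 X1 : Type)
  (S0 : function_array S L0 X0) (S1 : function_array S L1 X1) :
  Finite L0 -> Finite L1 ->
  exists f g, gamma_tensor_hom S0 S1 f g.
Proof.
  intros _ _.
  exists (fun p => prodU (fst p) (snd p)), (fun a => a).
  unfold gamma_tensor_hom, is_fa_hom.
  split; [|split; [|split]].
  - intros [U0 U1] [[HU0 G0] [HU1 G1]]; cbn.
    split; [apply prodU_uf; auto|].
    intros s [[l0|l1]|[l0 l1]]; unfold prodU, tensor_function_array, tensor_map; cbn.
    + apply (uf_up HU0 _ _ (G0 s l0)). intros x0 Hx. apply (proj2 (uf_const _ HU1)); exact Hx.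
    + apply (proj2 (uf_const _ HU0)); apply G1.
    + apply (uf_up HU0 _ _ (G0 s l0)). intros x0 [a [Ha Hsa]].
      destruct (ps_mul s a) as [sa|] eqn:Esa; [|congruence].
      apply (uf_up HU1 _ _ (G1 sa l1)). intros x1 [b [Hb Hsab]].
      rewrite Ha, Hb. pose proof (ps_assoc s a b) as E. rewrite Esa in E.
      destruct (ps_mul a b) as [ab|]; [|congruence].
      exists ab; split; auto. rewrite <- E. exact Hsab.
  - auto.
  - auto.
  - intros [[l0|l1]|[l0 l1]] [U0 U1] [[HU0 G0] [HU1 G1]];
      apply functional_extensionality; intro B; apply propositional_extensionality;
      unfold gamma_map, prodU, tensor_function_array, tensor_map, total_tensor_map; cbn.
    + apply uf_cong; auto. intros x0. apply uf_const; auto.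
    + apply uf_const; auto.
    + unfold gamma_mul, gamma_map. apply uf_cong; auto. intros x0.
      destruct (fa_map S0 l0 x0) as [a|].
      * split.
        -- intros H. exists a; split; auto. apply (uf_up HU1 _ _ H).
           intros x1. destruct (fa_map S1 l1 x1) as [b|].
           ++ intros [y [Hy HB]]. exists b; split; auto. exists y; auto.
           ++ intros [y [Hy _]]; discriminate.
        -- intros [s [Hs H]]. injection Hs as <-. apply (uf_up HU1 _ _ H).
           intros x1 [t [Ht [st [Hst HB]]]]. rewrite Ht. exists st; auto.
      * split.
        -- intros H. exfalso. pose proof HU1 as (_&F1&_).
           apply F1. apply (uf_up HU1 _ _ H). intros x1 [y [Hy _]]; discriminate.
        -- intros [s [Hs _]]; discriminate.
Qed.
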